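(* Let $\mathcal{C}$ be a category, let $\mathcal{D}$ be a full pro-reflective subcategory of $\mathcal{C}$, and let $J$ be a directed partially ordered set. Let $X,Y\in Ob\,\mathcal{C}$ and let $\boldsymbol{q}=(q_\mu):Y\to\boldsymbol{Y}=(Y_\mu,q_{\mu\mu'},M)$ be a $\mathcal{C}$-expansion of $Y$ with respect to $\mathcal{D}$. Suppose $(H_\mu)_{\mu\in M}$ is a family of $J$-shape morphisms $H_\mu:X\to Y_\mu$ in $Sh^J_{(\mathcal{C},\mathcal{D})}$ such that $S^J(q_{\mu\mu'})H_{\mu'}=H_\mu$ for all $\mu\le\mu'$ in $M$ (i.e. $\boldsymbol{H}=(H_\mu)$ is a morphism $\lfloor X\rfloor\to S^J(\boldsymbol{Y})$ of $pro$-$Sh^J_{(\mathcal{C},\mathcal{D})}$ from the rudimentary system $\lfloor X\rfloor$). Then there exists a unique $J$-shape morphism $F:X\to Y$ such that $S^J(q_\mu)F=H_\mu$ for every $\mu\in M$. Equivalently, $S^J(\boldsymbol{q}):Y\to S^J(\boldsymbol{Y})$ is an inverse limit of $S^J(\boldsymbol{Y})$ in $Sh^J_{(\mathcal{C},\mathcal{D})}$, and for each $X$ the assignment $F\mapsto (S^J(q_\mu)F)_\mu$ is a bijection $Sh^J_{(\mathcal{C},\mathcal{D})}(X,Y)\to pro\text{-}Sh^J_{(\mathcal{C},\mathcal{D})}(\lfloor X\rfloor,S^J(\boldsymbol{Y}))$.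
   Context: An inverse system $\boldsymbol{X}=(X_\lambda,p_{\lambda\lambda'},\Lambda)$ in a category $\mathcal{C}$: $\Lambda$ a directed preordered set, objects $X_\lambda$, morphisms $p_{\lambda\lambda'}:X_{\lambda'}\to X_\lambda$ ($\lambda\le\lambda'$) with $p_{\lambda\lambda}=1$, $p_{\lambda\lambda'}p_{\lambda'\lambda''}=p_{\lambda\lambda''}$. For a directed partially ordered set $J$ and inverse systems $\boldsymbol{X}$, $\boldsymbol{Y}=(Y_\mu,q_{\mu\mu'},M)$, a $J$-morphism $(f,f^j_\mu):\boldsymbol{X}\to\boldsymbol{Y}$ consists of a function $f:M\to\Lambda$ and $\mathcal{C}$-morphisms $f^j_\mu:X_{f(\mu)}\to Y_\mu$ ($\mu\in M$, $j\in J$) such that for all $\mu\le\mu'$ there exist $\lambda\ge f(\mu),f(\mu')$ and $j_0\in J$ with $f^{j'}_\mu p_{f(\mu)\lambda}=q_{\mu\mu'}f^{j'}_{\mu'}p_{f(\mu')\lambda}$ for all $j'\ge j_0$. Composition: $(g,g^j_\nu)(f,f^j_\mu)=(fg,g^j_\nu f^j_{g(\nu)})$; identity $(1_\Lambda,1_{X_\lambda})$. Two $J$-morphisms $(f,f^j_\mu),(f',f'^j_\mu):\boldsymbol{X}\to\boldsymbol{Y}$ are equivalent if for every $\mu$ there exist $\lambda\ge f(\mu),f'(\mu)$ and $j_0$ with $f^{j'}_\mu p_{f(\mu)\lambda}=f'^{j'}_\mu p_{f'(\mu)\lambda}$ for all $j'\ge j_0$; $pro^J$-$\mathcal{C}$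 is the resulting quotient category (objects: inverse systems in $\mathcal{C}$). For $J=\{1\}$ this is the usual $pro$-$\mathcal{C}$; the functor $\underline{I}:pro$-$\mathcal{C}\to pro^J$-$\mathcal{C}$ is the identity on objects and sends $[(f,f_\mu)]$ to $[(f,f^j_\mu=f_\mu)]$. Let $\mathcal{D}\subseteq\mathcal{C}$ be a full subcategory. For an inverse system $\boldsymbol{X}$ in $\mathcal{C}$ and $X\in Ob\,\mathcal{C}$, a family $\boldsymbol{p}=(p_\lambda:X\to X_\lambda)$ with $p_{\lambda\lambda'}p_{\lambda'}=p_\lambda$ is a $\mathcal{C}$-expansion of $X$ with respect to $\mathcal{D}$ if (E1) every $\mathcal{C}$-morphism $h:X\to P$ with $P\in Ob\,\mathcal{D}$ factors as $h=gp_\lambda$ for some $\lambda$ and $g:X_\lambda\to P$, and (E2) if $gp_\lambda=g'p_\lambda$ for $g,g':X_\lambda\to P$, $P\in Ob\,\mathcal{D}$, then $gp_{\lambda\lambda'}=g'p_{\lambda\lambda'}$ for some $\lambda'\ge\lambda$; it is a $\mathcal{D}$-expansion if moreover $\boldsymbol{X}$ is an inverse system in $\mathcal{D}$. $\mathcal{D}$ is pro-reflective if every object of $\mathcal{C}$ has a $\mathcal{D}$-expansion. The $J$-shape category $Sh^J_{(\mathcal{C},\mathcal{D})}$ has the objects of $\mathcal{C}$; choosing $\mathcal{D}$-expansions $\boldsymbol{p}:X\to\boldsymbol{X}$, $\boldsymbol{q}:Y\to\boldsymbol{Y}$, its morphisms $X\to Y$ are the morphisms $\boldsymbol{X}\to\boldsymbol{Y}$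 of $pro^J$-$\mathcal{D}$, where $\boldsymbol{f}$ (w.r.t. $\boldsymbol{p},\boldsymbol{q}$) and $\boldsymbol{f}'$ (w.r.t. other $\mathcal{D}$-expansions $\boldsymbol{p}',\boldsymbol{q}'$) are identified iff $\underline{I}(\boldsymbol{j})\boldsymbol{f}=\boldsymbol{f}'\underline{I}(\boldsymbol{i})$, with $\boldsymbol{i},\boldsymbol{j}$ the unique isomorphisms of $pro$-$\mathcal{D}$ satisfying $\boldsymbol{ip}=\boldsymbol{p}'$, $\boldsymbol{jq}=\boldsymbol{q}'$; composition is composition of representatives. The $J$-shape functor $S^J:\mathcal{C}\to Sh^J_{(\mathcal{C},\mathcal{D})}$ is the identity on objects and sends $g:X\to Y$ to the class of $\underline{I}(\boldsymbol{g})$, where $\boldsymbol{g}:\boldsymbol{X}\to\boldsymbol{Y}$ is the unique $pro$-$\mathcal{D}$ morphism with $\boldsymbol{gp}=\boldsymbol{q}g$. For an inverse system $\boldsymbol{Y}$ in $\mathcal{C}$, $S^J(\boldsymbol{Y})=(Y_\mu,S^J(q_{\mu\mu'}),M)$. *)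

(* Defs.v *)
Set Implicit Arguments.
Unset Strict Implicit.

Record Category := {
  Ob : Type;
  Hom : Ob -> Ob -> Type;
  comp : forall x y z : Ob, Hom y z -> Hom x y -> Hom x z;
  idm : forall x : Ob, Hom x x;
  comp_assoc : forall (x y z w : Ob) (h : Hom z w) (g : Hom y z) (f : Hom x y),
      comp h (comp g f) = comp (comp h g) f;
  comp_id_l : forall (x y : Ob) (f : Hom x y), comp (idm y) f = f;
  comp_id_r : forall (x y : Ob) (f : Hom x y), comp f (idm x) = f
}.
Arguments Ob : clear implicits.
Arguments Hom : clear implicits.
Arguments comp {_ x y z} _ _.
Arguments idm {_} x.

(** A full subcategory D of C is given by the predicate on objects [inD]. *)

Record DirPreorder := {
  idx : Type;
  le : idx -> idx -> Prop;
  le_refl : forall a, le a a;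
  le_trans : forall a b c, le a b -> le b c -> le a c;
  le_dir : forall a b, exists c, le a c /\ le b c
}.
Arguments le {d} _ _.

Record DirPoset := {
  jset :> DirPreorder;
  jantisym : forall a b : idx jset, le a b -> le b a -> a = b;
  jinhab : inhabited (idx jset)
}.

(** * Inverse systems in C.
    [bond l l'] is p_{l l'} : X_{l'} -> X_l; its axioms are only imposed for l <= l'. *)
Record InvSys (C : Category) := {
  ind : DirPreorder;
  obj : idx ind -> Ob C;
  bond : forall l l' : idx ind, Hom C (obj l') (obj l);
  bond_id : forall l, bond l l = idm (obj l);
  bond_comp : forall l l' l'', le l l' -> le l' l'' ->
      comp (bond l l') (bond l' l'') = bond l l''
}.
Arguments ind {C} _.
Arguments obj {C} _ _.
Arguments bond {C} _ _ _.

Section Mor.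
Variable C : Category.

Record JMorData (J : DirPoset) (X Y : InvSys C) := {
  jf : idx (ind Y) -> idx (ind X);
  jcomp : idx J -> forall mu : idx (ind Y), Hom C (obj X (jf mu)) (obj Y mu)
}.

Definition isJMor (J : DirPoset) (X Y : InvSys C) (f : JMorData J X Y) : Prop :=
  forall mu mu' : idx (ind Y), le mu mu' ->
    exists lam : idx (ind X), le (jf f mu) lam /\ le (jf f mu') lam /\
      exists j0 : idx J, forall j' : idx J, le j0 j' ->
        comp (jcomp f j' mu) (bond X (jf f mu) lam)
        = comp (bond Y mu mu') (comp (jcomp f j' mu') (bond X (jf f mu') lam)).

Definition JEquiv (J : DirPoset) (X Y : InvSys C) (f f' : JMorData J X Y) : Prop :=
  forall mu : idx (ind Y),
    exists lam : idx (ind X), le (jf f mu) lam /\ le (jf f' mu) lam /\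
      exists j0 : idx J, forall j' : idx J, le j0 j' ->
        comp (jcomp f j' mu) (bond X (jf f mu) lam)
        = comp (jcomp f' j' mu) (bond X (jf f' mu) lam).

Definition JComp (J : DirPoset) (X Y Z : InvSys C)
  (g : JMorData J Y Z) (f : JMorData J X Y) : JMorData J X Z :=
  {| jf := fun nu => jf f (jf g nu);
     jcomp := fun j nu => comp (jcomp g j nu) (jcomp f j (jf g nu)) |}.

(** * Morphisms of pro-C (the case J = {1}) *)
Record ProMorData (X Y : InvSys C) := {
  pf : idx (ind Y) -> idx (ind X);
  pcomp : forall mu : idx (ind Y), Hom C (obj X (pf mu)) (obj Y mu)
}.

Definition isProMor (X Y : InvSys C) (f : ProMorData X Y) : Prop :=
  forall mu mu' : idx (ind Y), le mu mu' ->
    exists lam : idx (ind X), le (pf f mu) lam /\ le (pf f mu') lam /\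
        comp (pcomp f mu) (bond X (pf f mu) lam)
        = comp (bond Y mu mu') (comp (pcomp f mu') (bond X (pf f mu') lam)).

Definition Ifun (J : DirPoset) (X Y : InvSys C) (f : ProMorData X Y) : JMorData J X Y :=
  {| jf := pf f; jcomp := fun _ mu => pcomp f mu |}.

Record Expansion (X : Ob C) := {
  esys : InvSys C;
  eproj : forall l : idx (ind esys), Hom C X (obj esys l);
  ecompat : forall l l', le l l' -> comp (bond esys l l') (eproj l') = eproj l
}.

Arguments esys {X} _.
Arguments eproj {X} _ _.

Definition isExpansion (inD : Ob C -> Prop) (X : Ob C) (e : Expansion X) : Prop :=
  (forall (P : Ob C), inD P -> forall h : Hom C X P,
      exists (l : idx (ind (esys e))) (g : Hom C (obj (esys e) l) P),
        h = comp g (eproj e l)) /\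
  (forall (P : Ob C), inD P -> forall (l : idx (ind (esys e)))
      (g g' : Hom C (obj (esys e) l) P),
      comp g (eproj e l) = comp g' (eproj e l) ->
      exists l', le l l' /\ comp g (bond (esys e) l l') = comp g' (bond (esys e) l l')).

Definition isDExpansion (inD : Ob C -> Prop) (X : Ob C) (e : Expansion X) : Prop :=
  isExpansion inD e /\ forall l, inD (obj (esys e) l).

(** * The J-shape category, relative to a choice E of D-expansions of all objects
    (such a choice exists exactly because D is pro-reflective).
    A J-shape morphism X -> Y is a J-morphism [F : JMorData J (esys (E X)) (esys (E Y))]
    with [isJMor F]; two are equal in Sh^J iff they are [JEquiv]; composition is
    [JComp]. *)

(** [IsShapeOf E g F]: F represents S^J(g), i.e. F is equivalent to I(g') where g' is
    a pro-D morphism with g' p = q g. *)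
Definition IsShapeOf (J : DirPoset) (E : forall X : Ob C, Expansion X)
  (X Y : Ob C) (g : Hom C X Y) (F : JMorData J (esys (E X)) (esys (E Y))) : Prop :=
  isJMor F /\
  exists g' : ProMorData (esys (E X)) (esys (E Y)),
    isProMor g' /\
    (forall mu, comp (pcomp g' mu) (eproj (E X) (pf g' mu)) = comp (eproj (E Y) mu) g) /\
    JEquiv F (Ifun J g').

End Mor.
Arguments IsShapeOf {C J} E {X Y} g F.
Arguments esys {C X} _.
Arguments eproj {C X} _ _.

(* Main.v *)
Require Import Defs.
From Stdlib Require Import IndefiniteDescription.
Set Implicit Arguments.
Unset Strict Implicit.

Section Gen.
Variable C : Category.
Variable inD : Ob C -> Prop.
Variable J : DirPoset.

Definition Rel (A : InvSys C) (P : Ob C) (l1 : idx (ind A)) (f1 : idx J -> Hom C (obj A l1) P)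
  (l2 : idx (ind A)) (f2 : idx J -> Hom C (obj A l2) P) : Prop :=
  exists l, le l1 l /\ le l2 l /\ exists j0 : idx J, forall j, le j0 j ->
    comp (f1 j) (bond A l1 l) = comp (f2 j) (bond A l2 l).
Arguments Rel {A P} l1 f1 l2 f2.

Lemma bond_split (A : InvSys C) P a b c (f : Hom C (obj A a) P) :
  le a b -> le b c -> comp f (bond A a c) = comp (comp f (bond A a b)) (bond A b c).
Proof. intros. rewrite <- comp_assoc, bond_comp; auto. Qed.

Lemma Rel_refl A P l (f : idx J -> Hom C (obj A l) P) : Rel l f l f.
Proof.
  exists l; split; [apply le_refl|split; [apply le_refl|]].
  destruct (jinhab J) as [j0]; exists j0; auto.
Qed.

Lemma Rel_sym A P l1 f1 l2 f2 : @Rel A P l1 f1 l2 f2 -> Rel l2 f2 l1 f1.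
Proof.
  intros [l [h1 [h2 [j0 e]]]]; exists l; split; auto; split; auto; exists j0; intros; symmetry; auto.
Qed.

Lemma Rel_trans A P l1 f1 l2 f2 l3 f3 : @Rel A P l1 f1 l2 f2 -> Rel l2 f2 l3 f3 -> Rel l1 f1 l3 f3.
Proof.
  intros [l [h1 [h2 [j0 e]]]] [l' [h2' [h3 [j0' e']]]].
  destruct (le_dir l l') as [l'' [a b]].
  destruct (le_dir j0 j0') as [j'' [c d]].
  exists l''; split; [eapply le_trans; eauto|split; [eapply le_trans; eauto|]].
  exists j''; intros j hj.
  rewrite (bond_split _ h1 a), e by (eapply le_trans; eauto).
  rewrite <- bond_split by auto.
  rewrite (bond_split _ h2' b), e' by (eapply le_trans; eauto).
  rewrite <- bond_split by auto. reflexivity.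
Qed.

Lemma Rel_post A P Q (v : Hom C P Q) l1 f1 l2 f2 : @Rel A P l1 f1 l2 f2 ->
  Rel l1 (fun j => comp v (f1 j)) l2 (fun j => comp v (f2 j)).
Proof.
  intros [l [h1 [h2 [j0 e]]]]; exists l; split; auto; split; auto; exists j0; intros.
  rewrite <- !comp_assoc, e; auto.
Qed.
Arguments Rel_post {A P Q} v {l1 f1 l2 f2} _.

Lemma Rel_ext A P l1 f1 l2 f2 g1 g2 : (forall j, f1 j = g1 j) -> (forall j, f2 j = g2 j) ->
  @Rel A P l1 f1 l2 f2 -> Rel l1 g1 l2 g2.
Proof.
  intros e1 e2 [l [h1 [h2 [j0 e]]]]; exists l; split; auto; split; auto; exists j0; intros.
  rewrite <- e1, <- e2; auto.
Qed.

Lemma isJMor_Rel X Y (F : JMorData J X Y) : isJMor F -> forall mu mu', le mu mu' ->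
  Rel (jf F mu) (fun j => jcomp F j mu) (jf F mu') (fun j => comp (bond Y mu mu') (jcomp F j mu')).
Proof.
  intros HF mu mu' h. destruct (HF _ _ h) as [l [h1 [h2 [j0 e]]]].
  exists l; split; auto; split; auto; exists j0; intros. rewrite e by auto. apply comp_assoc.
Qed.

Lemma Rel_isJMor X Y (F : JMorData J X Y) : (forall mu mu', le mu mu' ->
  Rel (jf F mu) (fun j => jcomp F j mu) (jf F mu') (fun j => comp (bond Y mu mu') (jcomp F j mu')))
  -> isJMor F.
Proof.
  intros HF mu mu' h. destruct (HF _ _ h) as [l [h1 [h2 [j0 e]]]].
  exists l; split; auto; split; auto; exists j0; intros. rewrite e by auto. symmetry; apply comp_assoc.
Qed.

Lemma JEquiv_Rel X Y (f f' : JMorData J X Y) : JEquiv f f' -> forall mu,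
  Rel (jf f mu) (fun j => jcomp f j mu) (jf f' mu) (fun j => jcomp f' j mu).
Proof. intros h mu; exact (h mu). Qed.

Lemma Rel_JEquiv X Y (f f' : JMorData J X Y) : (forall mu,
  Rel (jf f mu) (fun j => jcomp f j mu) (jf f' mu) (fun j => jcomp f' j mu)) -> JEquiv f f'.
Proof. intros h mu; exact (h mu). Qed.

Lemma E2' X (e : Expansion X) : isExpansion inD e -> forall P, inD P ->
  forall l1 l2 (g1 : Hom C (obj (esys e) l1) P) (g2 : Hom C (obj (esys e) l2) P),
  comp g1 (eproj e l1) = comp g2 (eproj e l2) ->
  exists l, le l1 l /\ le l2 l /\ comp g1 (bond (esys e) l1 l) = comp g2 (bond (esys e) l2 l).
Proof.
  intros [_ HE2] P HP l1 l2 g1 g2 Heq. destruct (le_dir l1 l2) as [l0 [h1 h2]].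
  assert (comp (comp g1 (bond (esys e) l1 l0)) (eproj e l0)
        = comp (comp g2 (bond (esys e) l2 l0)) (eproj e l0)) as H.
  { rewrite <- !comp_assoc, !ecompat; auto. }
  destruct (HE2 P HP l0 _ _ H) as [l [hl e']].
  exists l; split; [eapply le_trans; eauto | split; [eapply le_trans; eauto|]].
  rewrite (bond_split _ h1 hl), (bond_split _ h2 hl). exact e'.
Qed.
Arguments E2' {X e} _ {P} _ {l1 l2} g1 g2 _.

Variable E : forall X : Ob C, Expansion X.
Variable hE : forall X : Ob C, isDExpansion inD (E X).

Lemma shape_exists A B (g : Hom C A B) : exists g' : ProMorData (esys (E A)) (esys (E B)),
  isProMor g' /\ forall mu, comp (pcomp g' mu) (eproj (E A) (pf g' mu)) = comp (eproj (E B) mu) g.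
Proof.
  assert (H : forall mu, exists s : {l : idx (ind (esys (E A))) & Hom C (obj (esys (E A)) l) (obj (esys (E B)) mu)},
     comp (projT2 s) (eproj (E A) (projT1 s)) = comp (eproj (E B) mu) g).
  { intro mu. destruct (hE A) as [[HE1 _] _].
    destruct (HE1 _ (proj2 (hE B) mu) (comp (eproj (E B) mu) g)) as [l [h e]].
    exists (existT _ l h). simpl; symmetry; exact e. }
  set (c := fun mu => proj1_sig (constructive_indefinite_description _ (H mu))).
  assert (Hc : forall mu, comp (projT2 (c mu)) (eproj (E A) (projT1 (c mu))) = comp (eproj (E B) mu) g).
  { intro mu; exact (proj2_sig (constructive_indefinite_description _ (H mu))). }
  clearbody c.
  exists (Build_ProMorData (pf := fun mu => projT1 (c mu)) (fun mu => projT2 (c mu))).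
  split; [|exact Hc].
  intros mu mu' hmu. simpl.
  destruct (E2' (proj1 (hE A)) (proj2 (hE B) mu) (projT2 (c mu))
     (comp (bond _ mu mu') (projT2 (c mu')))) as [l [h1 [h2 e]]].
  - rewrite Hc, <- comp_assoc, Hc, comp_assoc, ecompat; auto.
  - exists l; split; auto; split; auto. rewrite e; symmetry; apply comp_assoc.
Qed.

Lemma shape_Ifun A B (g : Hom C A B) (g' : ProMorData (esys (E A)) (esys (E B))) :
  isProMor g' -> (forall mu, comp (pcomp g' mu) (eproj (E A) (pf g' mu)) = comp (eproj (E B) mu) g) ->
  IsShapeOf E g (Ifun J g').
Proof.
  intros Hp Hc. split.
  - intros mu mu' h; destruct (Hp mu mu' h) as [l [h1 [h2 e]]]; exists l; split; auto; split; auto.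
    destruct (jinhab J) as [j0]; exists j0; intros; exact e.
  - exists g'; split; auto; split; auto. apply Rel_JEquiv; intro; apply Rel_refl.
Qed.

Variables X Y : Ob C.
Variable q : Expansion Y.
Variable hq : isExpansion inD q.
Variable H : forall mu : idx (ind (esys q)),
         JMorData J (esys (E X)) (esys (E (obj (esys q) mu))).
Variable hH : forall mu, isJMor (H mu).
Variable hcompat : forall mu mu' : idx (ind (esys q)), le mu mu' ->
      forall G, IsShapeOf E (bond (esys q) mu mu') G ->
        JEquiv (JComp G (H mu')) (H mu).

Lemma W1 mu P (HP : inD P) k1 (u1 : Hom C (obj (esys (E (obj (esys q) mu))) k1) P) k2
  (u2 : Hom C (obj (esys (E (obj (esys q) mu))) k2) P) :
  comp u1 (eproj _ k1) = comp u2 (eproj _ k2) ->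
  Rel (jf (H mu) k1) (fun j => comp u1 (jcomp (H mu) j k1))
      (jf (H mu) k2) (fun j => comp u2 (jcomp (H mu) j k2)).
Proof.
  intro e. destruct (E2' (proj1 (hE _)) HP u1 u2 e) as [k [h1 [h2 e']]].
  pose proof (Rel_post u1 (isJMor_Rel (@hH mu) h1)) as R1.
  pose proof (Rel_post u2 (isJMor_Rel (@hH mu) h2)) as R2.
  eapply Rel_trans; [exact R1|]. apply Rel_sym. eapply Rel_trans; [exact R2|].
  apply Rel_ext with (f1 := fun j => comp u1 (comp (bond _ k1 k) (jcomp (H mu) j k)))
                     (f2 := fun j => comp u1 (comp (bond _ k1 k) (jcomp (H mu) j k))).
  - intro j. rewrite !comp_assoc, e'. reflexivity.
  - reflexivity.
  - apply Rel_refl.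
Qed.

Lemma W2 mu mu2 (hle : le mu mu2) P (HP : inD P) k (u : Hom C (obj (esys (E (obj (esys q) mu))) k) P)
  k2 (u2 : Hom C (obj (esys (E (obj (esys q) mu2))) k2) P) :
  comp u (comp (eproj _ k) (bond (esys q) mu mu2)) = comp u2 (eproj _ k2) ->
  Rel (jf (H mu) k) (fun j => comp u (jcomp (H mu) j k))
      (jf (H mu2) k2) (fun j => comp u2 (jcomp (H mu2) j k2)).
Proof.
  intro e. destruct (shape_exists (bond (esys q) mu mu2)) as [g' [Hg' Hc]].
  pose proof (JEquiv_Rel (hcompat hle (shape_Ifun Hg' Hc)) k) as R. simpl in R.
  apply (Rel_post u) in R. apply Rel_sym in R.
  eapply Rel_trans; [exact R|].
  apply Rel_ext with (f1 := fun j => comp (comp u (pcomp g' k)) (jcomp (H mu2) j (pf g' k)))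
                     (f2 := fun j => comp u2 (jcomp (H mu2) j k2)).
  - intro; symmetry; apply comp_assoc.
  - reflexivity.
  - apply W1; auto. rewrite <- comp_assoc, Hc. exact e.
Qed.
Arguments W2 {mu mu2} hle {P} HP k u k2 u2 _.

Lemma W3 mu1 mu2 P (HP : inD P) k1 (u1 : Hom C (obj (esys (E (obj (esys q) mu1))) k1) P)
  k2 (u2 : Hom C (obj (esys (E (obj (esys q) mu2))) k2) P) :
  comp u1 (comp (eproj _ k1) (eproj q mu1)) = comp u2 (comp (eproj _ k2) (eproj q mu2)) ->
  Rel (jf (H mu1) k1) (fun j => comp u1 (jcomp (H mu1) j k1))
      (jf (H mu2) k2) (fun j => comp u2 (jcomp (H mu2) j k2)).
Proof.
  intro e. rewrite !comp_assoc in e.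
  destruct (E2' hq HP (comp u1 (eproj _ k1)) (comp u2 (eproj _ k2)) e) as [mu [h1 [h2 e']]].
  destruct (proj1 (proj1 (hE (obj (esys q) mu))) P HP
      (comp (comp u1 (eproj _ k1)) (bond (esys q) mu1 mu))) as [k [u e2]].
  assert (R1 := W2 h1 HP k1 u1 k u ltac:(rewrite comp_assoc; exact e2)).
  assert (R2 := W2 h2 HP k2 u2 k u ltac:(rewrite comp_assoc, <- e'; exact e2)).
  eapply Rel_trans; [exact R1|]. apply Rel_sym; exact R2.
Qed.

Lemma U (F' : JMorData J (esys (E X)) (esys (E Y))) (HF' : isJMor F') nu1 nu
  (v : Hom C (obj (esys (E Y)) nu1) (obj (esys (E Y)) nu)) :
  comp v (eproj (E Y) nu1) = eproj (E Y) nu ->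
  Rel (jf F' nu1) (fun j => comp v (jcomp F' j nu1)) (jf F' nu) (fun j => jcomp F' j nu).
Proof.
  intro e.
  destruct (E2' (proj1 (hE Y)) (proj2 (hE Y) nu) v (idm _)
     ltac:(rewrite comp_id_l; exact e)) as [n [h1 [h2 e']]].
  rewrite comp_id_l in e'.
  pose proof (Rel_post v (isJMor_Rel HF' h1)) as R1.
  pose proof (isJMor_Rel HF' h2) as R2.
  eapply Rel_trans; [exact R1|]. apply Rel_sym. eapply Rel_trans; [exact R2|].
  apply Rel_ext with (f1 := fun j => comp (bond _ nu n) (jcomp F' j n))
                     (f2 := fun j => comp (bond _ nu n) (jcomp F' j n)).
  - reflexivity.
  - intro; rewrite comp_assoc, e'; reflexivity.
  - apply Rel_refl.
Qed.

Lemma main_thm :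
  exists F : JMorData J (esys (E X)) (esys (E Y)),
    isJMor F /\
    (forall mu, exists G, IsShapeOf E (eproj q mu) G /\ JEquiv (JComp G F) (H mu)) /\
    (forall F' : JMorData J (esys (E X)) (esys (E Y)), isJMor F' ->
       (forall mu G, IsShapeOf E (eproj q mu) G -> JEquiv (JComp G F') (H mu)) ->
       JEquiv F F').
Proof.
  assert (Hc : forall nu, exists s : {mu : idx (ind (esys q)) &
      {k : idx (ind (esys (E (obj (esys q) mu)))) &
        Hom C (obj (esys (E (obj (esys q) mu))) k) (obj (esys (E Y)) nu)}},
      eproj (E Y) nu = comp (projT2 (projT2 s))
         (comp (eproj _ (projT1 (projT2 s))) (eproj q (projT1 s)))).
  { intro nu. destruct (proj1 hq _ (proj2 (hE Y) nu) (eproj (E Y) nu)) as [mu [g e]].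
    destruct (proj1 (proj1 (hE (obj (esys q) mu))) _ (proj2 (hE Y) nu) g) as [k [h e2]].
    exists (existT _ mu (existT _ k h)). simpl. rewrite e, e2, comp_assoc; reflexivity. }
  set (c := fun nu => proj1_sig (constructive_indefinite_description _ (Hc nu))).
  assert (Hcc : forall nu, eproj (E Y) nu = comp (projT2 (projT2 (c nu)))
         (comp (eproj _ (projT1 (projT2 (c nu)))) (eproj q (projT1 (c nu))))).
  { intro nu; exact (proj2_sig (constructive_indefinite_description _ (Hc nu))). }
  clearbody c.
  exists (Build_JMorData (jf := fun nu => jf (H (projT1 (c nu))) (projT1 (projT2 (c nu))))
     (fun j nu => comp (projT2 (projT2 (c nu))) (jcomp (H (projT1 (c nu))) j (projT1 (projT2 (c nu)))))).
  split; [|split].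
  - apply Rel_isJMor. intros nu nu' hle. simpl.
    pose proof (Hcc nu) as Hn. pose proof (Hcc nu') as Hn'.
    revert Hn Hn'. destruct (c nu) as [mu [k h]]. destruct (c nu') as [mu' [k' h']].
    simpl. intros Hn Hn'.
    apply Rel_ext with (f1 := fun j => comp h (jcomp (H mu) j k))
       (f2 := fun j => comp (comp (bond _ nu nu') h') (jcomp (H mu') j k')).
    + reflexivity.
    + intro; symmetry; apply comp_assoc.
    + apply W3 with (P := obj (esys (E Y)) nu); [exact (proj2 (hE Y) nu)|].
      rewrite <- comp_assoc, <- Hn', ecompat by exact hle. symmetry; exact Hn.
  - intro mu. destruct (shape_exists (eproj q mu)) as [g' [Hg' Hc']].
    exists (Ifun J g'); split; [apply shape_Ifun; auto|].
    apply Rel_JEquiv; intro k. simpl.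
    pose proof (Hcc (pf g' k)) as Hn. pose proof (Hc' k) as Hk. revert Hn Hk.
    generalize (pcomp g' k). destruct (c (pf g' k)) as [mu1 [k1 h]]. simpl. intros gk Hn Hk.
    apply Rel_ext with (f1 := fun j => comp (comp gk h) (jcomp (H mu1) j k1))
       (f2 := fun j => comp (idm _) (jcomp (H mu) j k)).
    + intro; symmetry; apply comp_assoc.
    + intro; apply comp_id_l.
    + apply W3 with (P := obj (esys (E (obj (esys q) mu))) k);
        [exact (proj2 (hE _) k)|].
      rewrite comp_id_l, <- comp_assoc, <- Hn. exact Hk.
  - intros F' HF' Hyp. apply Rel_JEquiv; intro nu. simpl.
    pose proof (Hcc nu) as Hn. revert Hn. destruct (c nu) as [mu [k h]]. simpl. intro Hn.
    destruct (shape_exists (eproj q mu)) as [g' [Hg' Hc']].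
    pose proof (JEquiv_Rel (Hyp mu _ (shape_Ifun Hg' Hc')) k) as R. simpl in R.
    apply (Rel_post h) in R.
    eapply Rel_trans; [apply Rel_sym; exact R|].
    apply Rel_ext with (f1 := fun j => comp (comp h (pcomp g' k)) (jcomp F' j (pf g' k)))
        (f2 := fun j => jcomp F' j nu).
    + intro; symmetry; apply comp_assoc.
    + reflexivity.
    + apply U; auto. rewrite <- comp_assoc, Hc'. symmetry; exact Hn.
Qed.

End Gen.

Theorem theorem6 (C : Category) (inD : Ob C -> Prop) (J : DirPoset)
  (E : forall X : Ob C, Expansion X) (hE : forall X : Ob C, isDExpansion inD (E X))
  (X Y : Ob C) (q : Expansion Y) (hq : isExpansion inD q)
  (H : forall mu : idx (ind (esys q)),
         JMorData J (esys (E X)) (esys (E (obj (esys q) mu))))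
  (hH : forall mu, isJMor (H mu))
  (hcompat : forall mu mu' : idx (ind (esys q)), le mu mu' ->
      forall G, IsShapeOf E (bond (esys q) mu mu') G ->
        JEquiv (JComp G (H mu')) (H mu)) :
  exists F : JMorData J (esys (E X)) (esys (E Y)),
    isJMor F /\
    (forall mu, exists G, IsShapeOf E (eproj q mu) G /\ JEquiv (JComp G F) (H mu)) /\
    (forall F' : JMorData J (esys (E X)) (esys (E Y)), isJMor F' ->
       (forall mu G, IsShapeOf E (eproj q mu) G -> JEquiv (JComp G F') (H mu)) ->
       JEquiv F F').
Proof.
  exact (@main_thm C inD J E hE X Y q hq H hH hcompat).
Qed.
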